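(* Let $(T_1\to B_1)$ and $(T_2\to B_2)$ be bars. Then the tensor product $(T_1\to B_1)\otimes(T_2\to B_2)$, as a graded filtered chain complex over $\mathbb{F}_2$, is isomorphic to a direct sum of two bars $(X_1\to Y_1)\oplus(X_2\to Y_2)$, where the grading and filtration level of $Y_1$ are the sums of those of $B_1$ and $B_2$, and the grading and filtration level of $X_2$ are the sums of those of $T_1$ and $T_2$. In particular, one of the two summands is an even bar and the other is an odd bar.
   Context: All complexes are finite-dimensional, graded, filtered chain complexes over $\mathbb{F}_2$ whose differential lowers grading by one and does not increase filtration level. A bar $(T\to B)$ is a two-dimensional such complex with basis elements $T$ and $B$ (each homogeneous of a given grading and filtration level), differential $\partial T = B$ (so it is acyclic), with the filtration level of $B$ strictly less than that of $T$. A bar is even or odd according as the grading of $B$ is even or odd. Tensor products carry the grading and filtration given by summing those of the factors and the differential $\partial(x\otimes y)=\partial x\otimes y + x\otimes\partial y$. *)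

(* Defs.v *)
From HB Require Import structures.
From mathcomp Require Import all_boot all_order all_algebra.
Set Implicit Arguments. Unset Strict Implicit. Unset Printing Implicit Defensive.
Import Order.TTheory GRing.Theory Num.Theory.
Local Open Scope ring_scope.

(* A finite-dimensional graded filtered chain complex over F_2, presented by a
   finite basis [idx] of homogeneous elements; basis element [i] has grading
   [gr i] and filtration level [fl i] (the filtration level F_p is the span of
   the basis elements of level <= p).  [bd i j] is the coefficient of basis
   element [j] in the differential of basis element [i]. *)
Record cplx := Cplx {
  idx : finType;
  gr : idx -> int;
  fl : idx -> int;
  bd : idx -> idx -> 'F_2 }.

Definition is_cplx (C : cplx) : Prop :=
  (forall i k : idx C, \sum_(j : idx C) bd i j * bd j k = 0) /\
  (forall i j : idx C, bd i j != 0 -> gr j = gr i - 1 /\ (fl j <= fl i)%R).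

(* Isomorphism of graded filtered chain complexes: a bijective linear map P
   (basis element i of C goes to \sum_j P i j e'_j) with inverse Q which is a
   chain map, preserves gradings, and such that both P and Q preserve the
   filtration. *)
Definition cplx_iso (C D : cplx) : Prop :=
  exists (P : idx C -> idx D -> 'F_2) (Q : idx D -> idx C -> 'F_2),
    (forall i k : idx C, \sum_(j : idx D) P i j * Q j k = (i == k)%:R) /\
    (forall i k : idx D, \sum_(j : idx C) Q i j * P j k = (i == k)%:R) /\
    (forall (i : idx C) (k : idx D),
        \sum_(j : idx D) P i j * bd j k = \sum_(j : idx C) bd i j * P j k) /\
    (forall (i : idx C) (j : idx D), P i j != 0 -> gr j = gr i) /\
    (forall (i : idx D) (j : idx C), Q i j != 0 -> gr j = gr i) /\
    (forall (i : idx C) (j : idx D), P i j != 0 -> (fl j <= fl i)%R) /\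
    (forall (i : idx D) (j : idx C), Q i j != 0 -> (fl j <= fl i)%R).

(* Tensor product over F_2 (signs are irrelevant in characteristic 2). *)
Definition tensor (C D : cplx) : cplx :=
  @Cplx (idx C * idx D)%type
    (fun ij => gr ij.1 + gr ij.2)
    (fun ij => fl ij.1 + fl ij.2)
    (fun ij kl => bd ij.1 kl.1 * (ij.2 == kl.2)%:R + (ij.1 == kl.1)%:R * bd ij.2 kl.2).

Definition dsum (C D : cplx) : cplx :=
  @Cplx (idx C + idx D)%type
    (fun i => match i with inl a => gr a | inr b => gr b end)
    (fun i => match i with inl a => fl a | inr b => fl b end)
    (fun i j => match i, j with
                | inl a, inl b => bd a b
                | inr a, inr b => bd a b
                | _, _ => 0 end).

(* A bar (T -> B): gradings gT, gB (with gT = gB + 1, forced by d lowering the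
   grading by one) and filtration levels fT, fB with fB < fT. *)
Record bar := Bar {
  gT : int; gB : int; fT : int; fB : int;
  bar_gr : gT = gB + 1;
  bar_fl : (fB < fT)%R }.

(* The two-dimensional complex of a bar: basis index [true] is T, [false] is B. *)
Definition bar_cplx (b : bar) : cplx :=
  @Cplx bool
    (fun x => if x then gT b else gB b)
    (fun x => if x then fT b else fB b)
    (fun x y => if x && ~~ y then 1 else 0).

Definition bar_even (b : bar) : bool := (2 %| gB b)%Z.

(* Main.v *)
Require Import Defs.
From mathcomp Require Import all_boot all_order all_algebra.
From mathcomp Require Import zify.
Local Open Scope ring_scope.
Definition Prel (s : bool) (i : bool * bool) (j : bool + bool) : bool :=
  match j with
  | inl true => (i == (s, ~~ s)) || (i == (~~ s, s))
  | inl false => i == (false, false)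
  | inr true => i == (true, true)
  | inr false => i == (~~ s, s) end.
Definition Qrel (s : bool) (j : bool + bool) (i : bool * bool) : bool :=
  match j with
  | inl true => i == (s, ~~ s)
  | inl false => i == (false, false)
  | inr true => i == (true, true)
  | inr false => (i == (s, ~~ s)) || (i == (~~ s, s)) end.
Lemma sum_sb (F : bool + bool -> 'F_2) :
  \sum_(j : bool + bool) F j = F (inl true) + F (inl false) + (F (inr true) + F (inr false)).
Proof. by rewrite big_sumType !big_bool. Qed.
Lemma sum_pb (F : bool * bool -> 'F_2) :
  \sum_(j : bool * bool) F j = F (true,true) + F (true,false) + (F (false,true) + F (false,false)).
Proof. rewrite (eq_bigr (fun p => F (p.1, p.2))); last by case.
by rewrite -(pair_bigA _ (fun a b => F (a,b))) !big_bool. Qed.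
Lemma par (x : int) : (2 %| x)%Z != (2 %| x + 1)%Z.
Proof. apply/negP => /eqP H. lia. Qed.

Lemma iso_gen (s : bool) (c1 c2 b1 b2 : bar) :
  gT c1 = gT b1 + gB b2 -> gB c1 = gB b1 + gB b2 ->
  gT c2 = gT b1 + gT b2 -> gB c2 = gT b1 + gB b2 ->
  gT b1 + gB b2 = gB b1 + gT b2 ->
  fB c1 = fB b1 + fB b2 -> fT c2 = fT b1 + fT b2 ->
  fT c1 = (if s then fT b1 + fB b2 else fB b1 + fT b2) ->
  fB c2 = (if s then fB b1 + fT b2 else fT b1 + fB b2) ->
  (if s then fT b1 + fB b2 <= fB b1 + fT b2 else fB b1 + fT b2 <= fT b1 + fB b2) ->
  cplx_iso (tensor (bar_cplx b1) (bar_cplx b2)) (dsum (bar_cplx c1) (bar_cplx c2)).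
Proof.
move=> g1 g2 g3 g4 g5 f1 f2 f3 f4 H.
have lb1 := bar_fl b1. have lb2 := bar_fl b2.
have lc1 := bar_fl c1. have lc2 := bar_fl c2.
exists (fun i j => (Prel s i j)%:R), (fun j i => (Qrel s j i)%:R).
split; [|split; [|split; [|split; [|split; [|split]]]]].
- move=> i k; rewrite sum_sb.
  case: s {f3 f4 H}; case: i => [[] []]; case: k => [[] []]; apply/eqP; by [].
- move=> i k; rewrite sum_pb.
  case: s {f3 f4 H}; case: i => [[]|[]]; case: k => [[]|[]]; apply/eqP; by [].
- move=> i k; rewrite sum_sb sum_pb.
  case: s {f3 f4 H}; case: i => [[] []]; case: k => [[]|[]]; apply/eqP; by [].
- move=> i j; rewrite /= in g1 g2 g3 g4 g5 *.
  case: s {f3 f4 H}; case: i => [[] []]; case: j => [[]|[]] //= _;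
  rewrite ?g1 ?g2 ?g3 ?g4 //; lia.
- move=> i j; rewrite /= in g1 g2 g3 g4 g5 *.
  case: s {f3 f4 H}; case: i => [[]|[]]; case: j => [[] []] //= _;
  rewrite ?g1 ?g2 ?g3 ?g4 //; lia.
- move=> i j.
  case: s f3 f4 H; case: i => [[] []]; case: j => [[]|[]] //= e3 e4 H _;
  rewrite ?e3 ?e4 ?f1 ?f2 //; lia.
- move=> i j.
  case: s f3 f4 H; case: i => [[]|[]]; case: j => [[] []] //= e3 e4 H _;
  rewrite ?e3 ?e4 ?f1 ?f2 //; lia.
Qed.

Theorem mainTheorem4 (b1 b2 : bar) :
  exists c1 c2 : bar,
    cplx_iso (tensor (bar_cplx b1) (bar_cplx b2)) (dsum (bar_cplx c1) (bar_cplx c2)) /\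
    gB c1 = gB b1 + gB b2 /\ fB c1 = fB b1 + fB b2 /\
    gT c2 = gT b1 + gT b2 /\ fT c2 = fT b1 + fT b2 /\
    bar_even c1 != bar_even c2.
Proof.
case: b1 b2 => [g1 h1 t1 u1 E1 L1] [g2 h2 t2 u2 E2 L2] /=.
have Lc1a : (u1 + u2 < t1 + u2)%R by lia.
have Lc1b : (u1 + u2 < u1 + t2)%R by lia.
have Lc2a : (u1 + t2 < t1 + t2)%R by lia.
have Lc2b : (t1 + u2 < t1 + t2)%R by lia.
have Gc1 : g1 + h2 = (h1 + h2) + 1 by lia.
have Gc2 : g1 + g2 = (g1 + h2) + 1 by lia.
case Hs: (t1 + u2 <= u1 + t2)%R.
- exists (Bar Gc1 Lc1a), (Bar Gc2 Lc2a); split.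
    apply: (iso_gen true) => //=; rewrite ?Hs //; lia.
  do 4 (split; first done).
  rewrite /bar_even /=; have -> : g1 + h2 = h1 + h2 + 1 by lia.
  exact: par.
- exists (Bar Gc1 Lc1b), (Bar Gc2 Lc2b); split.
    apply: (iso_gen false) => //=; lia.
  do 4 (split; first done).
  rewrite /bar_even /=; have -> : g1 + h2 = h1 + h2 + 1 by lia.
  exact: par.
Qed.
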